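(* Let $n\ge 1$ be an integer and $0<\rho<1$. Consider the difference equation $$x_k - C_n^1\rho\, x_{k-1} + C_n^2\rho^2 x_{k-2} - \dots + (-1)^n\rho^n x_{k-n}=0,\qquad k=n,n+1,\dots,$$ (whose characteristic polynomial is $(\lambda-\rho)^n$) with initial conditions $x^{(0)}=(x_0,\dots,x_{n-1})\in\mathbb R^n$. For $i=0,\dots,n-1$ let $P_i(k)=\prod_{j\in\{0,\dots,n-1\},\,j\ne i}\frac{k-j}{i-j}$. Then: (i) for all $k\ge 0$, $$x_k=\sum_{i=0}^{n-1} x_i\,P_i(k)\,\rho^{k-i};$$ (ii) for every $k\ge n$, $\max_{\|x^{(0)}\|_\infty\le 1} x_k=\alpha_{k,n}:=\sum_{i=0}^{n-1}|P_i(k)|\rho^{k-i}$, and this maximum is attained at $x^{(0)}=((-1)^{n-1},\dots,1,-1,1)$, i.e. $x_i=(-1)^{n-1-i}$; consequently, for all $\|x^{(0)}\|_\infty\le1$ and $k\ge n$ one has $|x_k|\le\alpha_{k,n}$, and $\max_{\|x^{(0)}\|_\infty\le1}\eta(x^{(0)})=\max_{k\ge n}\alpha_{k,n}$, attained for $x^{(0)}=((-1)^{n-1},\dots,-1,1)$ at an index $k=K_\alpha\in\arg\max_{k\ge n}\alpha_{k,n}$; (iii) for the initial condition $x^{(0)}=(0,\dots,0,1)$ the solution is $x_k=\beta_{k,n}:=C_k^{n-1}\rho^{k-n+1}$ for all $k\ge n-1$, the maximum of $\beta_{k,n}$ over $k\ge n-1$ is attained at $k=K_\beta=\lfloor \frac{n-1}{1-\rho}\rfloor$,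 and $\max_{k\ge n}\beta_{k,n}>1$ (i.e. a peak occurs) if and only if $\rho>1/n$.
   Context: $C_p^q=\frac{p!}{q!(p-q)!}$. For a solution of an $n$th order scalar difference equation with initial vector $x^{(0)}=(x_0,\dots,x_{n-1})$, the peak is $\eta(x^{(0)})=\max_{k\ge n}|x_k|$; one says a peak occurs when $\eta(x^{(0)})>1$ for an initial condition with $\|x^{(0)}\|_\infty=1$. *)

(* Defs.v *)
From Stdlib Require Import Reals Lra Lia List.
Open Scope R_scope.

Definition rsum (n : nat) (f : nat -> R) : R :=
  fold_right Rplus 0 (map f (seq 0 n)).
Definition rprod (n : nat) (f : nat -> R) : R :=
  fold_right Rmult 1 (map f (seq 0 n)).

Definition solves (n : nat) (rho : R) (x : nat -> R) : Prop :=
  forall k : nat, (n <= k)%nat ->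
    rsum (S n) (fun j => (-1) ^ j * C n j * rho ^ j * x (k - j)%nat) = 0.

Definition P (n i k : nat) : R :=
  rprod n (fun j => if Nat.eqb j i then 1 else (INR k - INR j) / (INR i - INR j)).

(* alpha_{k,n} = sum_{i<n} |P_i(k)| rho^(k-i)  (used for k >= n) *)
Definition alpha (n : nat) (rho : R) (k : nat) : R :=
  rsum n (fun i => Rabs (P n i k) * rho ^ (k - i)).

(* beta_{k,n} = C(k, n-1) rho^(k-n+1)  (used for k >= n-1) *)
Definition beta (n : nat) (rho : R) (k : nat) : R :=
  C k (n - 1) * rho ^ (k + 1 - n).

Definition init_bounded (n : nat) (x : nat -> R) : Prop :=
  forall i : nat, (i < n)%nat -> Rabs (x i) <= 1.

Definition alt_init (n : nat) (x : nat -> R) : Prop :=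
  forall i : nat, (i < n)%nat -> x i = (-1) ^ (n - 1 - i).

Definition unit_init (n : nat) (x : nat -> R) : Prop :=
  forall i : nat, (i < n)%nat -> x i = if Nat.eqb i (n - 1) then 1 else 0.

(* Main.v *)
Require Import Defs.
From Stdlib Require Import Reals Lra Lia List Factorial.
Open Scope R_scope.

Lemma fold_plus_acc (l : list R) r : fold_right Rplus r l = fold_right Rplus 0 l + r.
Proof. induction l; simpl; [lra|rewrite IHl; lra]. Qed.
Lemma fold_mult_acc (l : list R) r : fold_right Rmult r l = fold_right Rmult 1 l * r.
Proof. induction l; simpl; [lra|rewrite IHl; ring]. Qed.

Lemma rsum_S n f : rsum (S n) f = rsum n f + f n.
Proof. unfold rsum. rewrite seq_S, map_app, fold_right_app. simpl.
  rewrite fold_plus_acc. lra. Qed.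
Lemma rprod_S n f : rprod (S n) f = rprod n f * f n.
Proof. unfold rprod. rewrite seq_S, map_app, fold_right_app. simpl.
  rewrite fold_mult_acc. ring. Qed.
Lemma rsum_0 f : rsum 0 f = 0. Proof. reflexivity. Qed.
Lemma rprod_0 f : rprod 0 f = 1. Proof. reflexivity. Qed.

Lemma rsum_ext n f g : (forall i, (i < n)%nat -> f i = g i) -> rsum n f = rsum n g.
Proof. induction n; intros H; [reflexivity|]. rewrite !rsum_S, (H n) by lia.
  rewrite IHn; [reflexivity|intros; apply H; lia]. Qed.
Lemma rprod_ext n f g : (forall i, (i < n)%nat -> f i = g i) -> rprod n f = rprod n g.
Proof. induction n; intros H; [reflexivity|]. rewrite !rprod_S, (H n) by lia.
  rewrite IHn; [reflexivity|intros; apply H; lia]. Qed.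

Lemma rsum_shift n f : rsum (S n) f = f 0%nat + rsum n (fun j => f (S j)).
Proof. induction n. rewrite rsum_S, !rsum_0. lra.
  rewrite rsum_S, IHn, (rsum_S n). lra. Qed.

Lemma rsum_plus n f g : rsum n (fun i => f i + g i) = rsum n f + rsum n g.
Proof. induction n; [rewrite ?rsum_0; simpl; lra|]. rewrite !rsum_S, IHn. lra. Qed.
Lemma rsum_minus n f g : rsum n (fun i => f i - g i) = rsum n f - rsum n g.
Proof. induction n; [rewrite ?rsum_0; simpl; lra|]. rewrite !rsum_S, IHn. lra. Qed.
Lemma rsum_scal n c f : rsum n (fun i => c * f i) = c * rsum n f.
Proof. induction n; [rewrite ?rsum_0; simpl; lra|]. rewrite !rsum_S, IHn. lra. Qed.
Lemma rsum_zero n f : (forall i, (i < n)%nat -> f i = 0) -> rsum n f = 0.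
Proof. induction n; intros H; [reflexivity|]. rewrite rsum_S, (H n) by lia.
  rewrite IHn; [lra|intros; apply H; lia]. Qed.
Lemma rsum_const n c : rsum n (fun _ => c) = INR n * c.
Proof. induction n; [rewrite ?rsum_0; simpl; lra|]. rewrite rsum_S, IHn, S_INR. ring. Qed.
Lemma rsum_le n f g : (forall i, (i < n)%nat -> f i <= g i) -> rsum n f <= rsum n g.
Proof. induction n; intros H; [rewrite ?rsum_0; simpl; lra|]. rewrite !rsum_S.
  assert (f n <= g n) by (apply H; lia).
  assert (rsum n f <= rsum n g) by (apply IHn; intros; apply H; lia). lra. Qed.
Lemma rsum_nonneg n f : (forall i, (i < n)%nat -> 0 <= f i) -> 0 <= rsum n f.
Proof. intros H. replace 0 with (rsum n (fun _ => 0)). apply rsum_le; auto.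
  rewrite rsum_const. ring. Qed.
Lemma rsum_abs n f : Rabs (rsum n f) <= rsum n (fun i => Rabs (f i)).
Proof. induction n; [rewrite ?rsum_0, Rabs_R0; lra|]. rewrite !rsum_S.
  eapply Rle_trans. apply Rabs_triang. lra. Qed.
Lemma rsum_single n k f : (k < n)%nat -> (forall i, (i < n)%nat -> i <> k -> f i = 0) ->
  rsum n f = f k.
Proof. induction n; intros Hk H; [lia|]. rewrite rsum_S.
  destruct (Nat.eq_dec k n) as [->|Hne].
  - rewrite rsum_zero; [lra|]. intros i Hi; apply H; lia.
  - rewrite IHn; [|lia|intros; apply H; lia]. rewrite (H n); [lra|lia|auto]. Qed.

Lemma rprod_one n f : (forall i, (i < n)%nat -> f i = 1) -> rprod n f = 1.
Proof. induction n; intros H; [reflexivity|]. rewrite rprod_S, (H n) by lia.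
  rewrite IHn; [lra|intros; apply H; lia]. Qed.
Lemma rprod_zero n f j : (j < n)%nat -> f j = 0 -> rprod n f = 0.
Proof. induction n; intros Hj H; [lia|]. rewrite rprod_S.
  destruct (Nat.eq_dec j n) as [->|Hne]. rewrite H; ring.
  rewrite IHn; [ring|lia|auto]. Qed.
Lemma rprod_abs_le n f B : 0 <= B -> (forall i, (i < n)%nat -> Rabs (f i) <= B) ->
  Rabs (rprod n f) <= B ^ n.
Proof. intros HB. induction n; intros H. rewrite rprod_0; simpl; rewrite Rabs_R1; lra.
  rewrite rprod_S, Rabs_mult. simpl. rewrite Rmult_comm.
  apply Rmult_le_compat; try apply Rabs_pos; first [apply H; lia | apply IHn; intros; apply H; lia]. Qed.

Definition D (f : R -> R) (t : R) : R := f t - f (t - 1).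
Fixpoint Dn (k : nat) (f : R -> R) : R -> R :=
  match k with O => f | S k => Dn k (D f) end.

Lemma Dn_ext k : forall f g, (forall t, f t = g t) -> forall t, Dn k f t = Dn k g t.
Proof. induction k; intros f g H t; simpl; auto. apply IHk. intros; unfold D; rewrite !H; auto. Qed.
Lemma Dn_plus k : forall f g t, Dn k (fun t => f t + g t) t = Dn k f t + Dn k g t.
Proof. induction k; intros f g t; simpl; auto.
  rewrite <- IHk. apply Dn_ext. intros; unfold D; lra. Qed.
Lemma Dn_scal k : forall c f t, Dn k (fun t => c * f t) t = c * Dn k f t.
Proof. induction k; intros c f t; simpl; auto.
  rewrite <- IHk. apply Dn_ext. intros; unfold D; lra. Qed.
Lemma Dn_shift k : forall f t, Dn k (fun t => f (t - 1)) t = Dn k f (t - 1).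
Proof. induction k; intros f t; simpl; auto.
  rewrite <- IHk. apply Dn_ext. intros; unfold D; lra. Qed.
Lemma Dn_zero k : forall t, Dn k (fun _ => 0) t = 0.
Proof. induction k; intros t; simpl; auto.
  rewrite <- (IHk t). apply Dn_ext. intros; unfold D; lra. Qed.

Definition Pd (m : nat) (f : R -> R) : Prop := forall t, Dn (S m) f t = 0.

Lemma Pd_ext m f g : (forall t, f t = g t) -> Pd m f -> Pd m g.
Proof. intros H Hf t. rewrite <- (Dn_ext _ f g H). auto. Qed.
Lemma Pd_plus m f g : Pd m f -> Pd m g -> Pd m (fun t => f t + g t).
Proof. intros Hf Hg t. rewrite Dn_plus, Hf, Hg; lra. Qed.
Lemma Pd_scal m c f : Pd m f -> Pd m (fun t => c * f t).
Proof. intros Hf t. rewrite Dn_scal, Hf; lra. Qed.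
Lemma Pd_shift m f : Pd m f -> Pd m (fun t => f (t - 1)).
Proof. intros Hf t. rewrite Dn_shift, Hf; lra. Qed.
Lemma Pd_zero m : Pd m (fun _ => 0).
Proof. intros t. apply Dn_zero. Qed.
Lemma Pd_const c : Pd 0 (fun _ => c).
Proof. intros t. simpl. unfold D. lra. Qed.

Lemma Pd_mul_aff m : forall f c d, Pd m f -> Pd (S m) (fun t => f t * (c * t + d)).
Proof.
  induction m; intros f c d H.
  - change (Pd 0 (D (fun t => f t * (c * t + d)))).
    apply Pd_ext with (fun t => D f t * (c * t + d) + c * f (t - 1)).
    { intros t; unfold D; ring. }
    apply Pd_plus.
    + apply Pd_ext with (fun _ => 0). intros t. specialize (H t). simpl in H. rewrite H; ring.
      apply Pd_zero.
    + apply Pd_scal, Pd_shift, H.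
  - change (Pd (S m) (D (fun t => f t * (c * t + d)))).
    apply Pd_ext with (fun t => D f t * (c * t + d) + c * f (t - 1)).
    { intros t; unfold D; ring. }
    apply Pd_plus.
    + apply IHm. exact H.
    + apply Pd_scal, Pd_shift, H.
Qed.

Lemma Pd_rsum m N (h : nat -> R -> R) : (forall i, (i < N)%nat -> Pd m (h i)) ->
  Pd m (fun t => rsum N (fun i => h i t)).
Proof. induction N; intros H.
  - apply Pd_ext with (fun _ => 0). intros; reflexivity. apply Pd_zero.
  - apply Pd_ext with (fun t => rsum N (fun i => h i t) + h N t).
    intros; rewrite rsum_S; auto. apply Pd_plus; auto. Qed.

Lemma C_n_0 n : C n 0 = 1.
Proof. unfold C. rewrite Nat.sub_0_r. simpl. field. apply INR_fact_neq_0. Qed.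
Lemma C_n_n n : C n n = 1.
Proof. unfold C. rewrite Nat.sub_diag. simpl. field. apply INR_fact_neq_0. Qed.

Definition alt (n : nat) (f : R -> R) (t : R) : R :=
  rsum (S n) (fun j => (-1) ^ j * C n j * f (t - INR j)).

Lemma alt_Dn n : forall f t, alt n f t = Dn n f t.
Proof.
  induction n; intros f t.
  - unfold alt. rewrite rsum_S, rsum_0. simpl. rewrite C_n_0. replace (t - 0) with t by lra. lra.
  - simpl. rewrite <- IHn. unfold alt, D.
    rewrite (rsum_ext (S n) (fun j => (-1) ^ j * C n j * (f (t - INR j) - f (t - INR j - 1)))
      (fun j => (-1) ^ j * C n j * f (t - INR j) - (-1) ^ j * C n j * f (t - INR j - 1)))
      by (intros; ring).
    rewrite rsum_minus.
    rewrite (rsum_shift n (fun j => (-1) ^ j * C n j * f (t - INR j))).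
    rewrite (rsum_S n (fun j => (-1) ^ j * C n j * f (t - INR j - 1))).
    rewrite rsum_shift, rsum_S.
    rewrite (rsum_ext n (fun j => (-1) ^ S j * C (S n) (S j) * f (t - INR (S j)))
      (fun j => (-1) ^ S j * C n (S j) * f (t - INR (S j)) - (-1) ^ j * C n j * f (t - INR j - 1))).
    + rewrite rsum_minus. rewrite !C_n_0, !C_n_n.
      replace (t - INR (S n)) with (t - INR n - 1) by (rewrite S_INR; lra). simpl. ring.
    + intros i Hi. rewrite <- pascal by lia.
      replace (t - INR i - 1) with (t - INR (S i)) by (rewrite S_INR; lra). simpl. ring.
Qed.

Definition Pr (n i : nat) (t : R) : R :=
  rprod n (fun j => if Nat.eqb j i then 1 else (t - INR j) / (INR i - INR j)).

Lemma P_Pr n i k : P n i k = Pr n i (INR k). Proof. reflexivity. Qed.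

Lemma Pr_Pd i : forall N, ((i < N)%nat -> Pd (N - 1) (Pr N i)) /\ ((N <= i)%nat -> Pd N (Pr N i)).
Proof.
  induction N as [|N [IH1 IH2]].
  - split; intros H; [lia|]. unfold Pr. apply Pd_ext with (fun _ => 1).
    intros; rewrite rprod_0; auto. apply Pd_const.
  - assert (Haff : forall m, Pd m (Pr N i) -> N <> i ->
      Pd (S m) (Pr (S N) i)).
    { intros m Hm Hne. unfold Pr.
      apply Pd_ext with (fun t => Pr N i t * (/ (INR i - INR N) * t + (- INR N / (INR i - INR N)))).
      - intros t. rewrite rprod_S. unfold Pr.
        destruct (Nat.eqb_spec N i); [contradiction|]. f_equal. unfold Rdiv; ring.
      - apply Pd_mul_aff. exact Hm. }
    split; intros H.
    + destruct (Nat.eq_dec i N) as [->|Hne].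
      * replace (S N - 1)%nat with N by lia. unfold Pr.
        apply Pd_ext with (fun t => Pr N N t).
        { intros t. rewrite rprod_S. rewrite Nat.eqb_refl. unfold Pr. ring. }
        apply IH2; lia.
      * replace (S N - 1)%nat with (S (N - 1)) by lia. apply Haff; [apply IH1; lia|lia].
    + apply Haff; [apply IH2; lia|lia].
Qed.

Lemma powerRZ_sub rho k i : rho <> 0 ->
  powerRZ rho (Z.of_nat k - Z.of_nat i) = rho ^ k * / rho ^ i.
Proof. intros H. unfold Z.sub. rewrite powerRZ_add by auto. rewrite powerRZ_neg'.
  rewrite <- !pow_powerRZ. reflexivity. Qed.

Lemma powerRZ_sub_nat rho k i : (i <= k)%nat ->
  powerRZ rho (Z.of_nat k - Z.of_nat i) = rho ^ (k - i).
Proof. intros H. rewrite <- Znat.Nat2Z.inj_sub by auto. rewrite <- pow_powerRZ. reflexivity. Qed.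

Definition ysol (n : nat) (rho : R) (x : nat -> R) (k : nat) : R :=
  rsum n (fun i => x i * P n i k * powerRZ rho (Z.of_nat k - Z.of_nat i)%Z).

Lemma ysol_eq n rho x k : rho <> 0 ->
  ysol n rho x k = rho ^ k * rsum n (fun i => (x i * / rho ^ i) * Pr n i (INR k)).
Proof. intros H. unfold ysol. rewrite <- rsum_scal. apply rsum_ext. intros i Hi.
  rewrite powerRZ_sub by auto. rewrite P_Pr. ring. Qed.

Lemma ysol_solves n rho x : (1 <= n)%nat -> rho <> 0 -> solves n rho (ysol n rho x).
Proof.
  intros Hn Hr k Hk.
  set (F := fun t => rsum n (fun i => (x i * / rho ^ i) * Pr n i t)).
  assert (HF : Pd (n - 1) F).
  { unfold F. apply Pd_rsum. intros i Hi. apply Pd_scal. apply (proj1 (Pr_Pd i n)). auto. }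
  rewrite (rsum_ext (S n) _ (fun j => rho ^ k * ((-1) ^ j * C n j * F (INR k - INR j)))).
  - rewrite rsum_scal. fold (alt n F (INR k)). rewrite alt_Dn.
    assert (HD : Dn n F (INR k) = 0).
    { destruct n as [|m]; [lia|]. replace (S m - 1)%nat with m in HF by lia. exact (HF _). }
    rewrite HD. ring.
  - intros j Hj. rewrite ysol_eq by auto. unfold F. rewrite minus_INR by lia.
    replace (rho ^ k) with (rho ^ j * rho ^ (k - j)) at 1.
    ring. rewrite <- pow_add. f_equal. lia.
Qed.

Lemma P_diag n k : (k < n)%nat -> P n k k = 1.
Proof. intros Hk. unfold P. apply rprod_one. intros j Hj.
  destruct (Nat.eqb_spec j k); auto. field.
  intros Heq. apply n0. apply INR_eq. lra. Qed.

Lemma P_off n i k : (k < n)%nat -> i <> k -> P n i k = 0.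
Proof. intros Hk Hik. unfold P. apply (rprod_zero _ _ k Hk).
  destruct (Nat.eqb_spec k i); [congruence|]. unfold Rdiv. rewrite Rminus_diag. ring. Qed.

Lemma ysol_init n rho x k : (k < n)%nat -> ysol n rho x k = x k.
Proof. intros Hk. unfold ysol. rewrite (rsum_single n k); auto.
  - rewrite P_diag by auto. rewrite Z.sub_diag. simpl. ring.
  - intros i Hi Hne. rewrite P_off by auto. ring. Qed.

Lemma solves_rec n rho z k : solves n rho z -> (n <= k)%nat ->
  z k = - rsum n (fun j => (-1) ^ S j * C n (S j) * rho ^ S j * z (k - S j)%nat).
Proof. intros Hs Hk. specialize (Hs k Hk). rewrite rsum_shift in Hs.
  rewrite C_n_0, Nat.sub_0_r in Hs. simpl in Hs |- *. lra. Qed.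

Lemma part_i n rho : (1 <= n)%nat -> 0 < rho -> forall x, solves n rho x ->
  forall k, x k = ysol n rho x k.
Proof.
  intros Hn Hr x Hx.
  assert (Hy : solves n rho (ysol n rho x)) by (apply ysol_solves; lra || auto).
  intros k. induction k as [k IH] using (well_founded_induction Wf_nat.lt_wf).
  destruct (Nat.lt_ge_cases k n) as [Hk|Hk].
  - rewrite ysol_init; auto.
  - rewrite (solves_rec n rho x k Hx Hk), (solves_rec n rho _ k Hy Hk).
    f_equal. apply rsum_ext. intros j Hj. rewrite (IH (k - S j)%nat) by lia. reflexivity.
Qed.

Lemma Pr_sign i k : forall m, (m <= k)%nat -> 0 < (-1) ^ (m - 1 - i) * Pr m i (INR k).
Proof.
  induction m; intros Hm.
  - unfold Pr. rewrite rprod_0. simpl. lra.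
  - unfold Pr in *. rewrite rprod_S. specialize (IHm ltac:(lia)).
    set (p := rprod m _) in *.
    assert (Hk : INR m < INR k) by (apply lt_INR; lia).
    destruct (Nat.eqb_spec m i) as [->|Hne].
    + replace (S i - 1 - i)%nat with (i - 1 - i)%nat by lia. lra.
    + destruct (Nat.lt_ge_cases m i) as [Hlt|Hge].
      * replace (S m - 1 - i)%nat with (m - 1 - i)%nat by lia.
        assert (INR m < INR i) by (apply lt_INR; lia).
        assert (0 < (INR k - INR m) / (INR i - INR m)) by (apply Rdiv_lt_0_compat; lra).
        replace ((-1) ^ (m - 1 - i) * (p * ((INR k - INR m) / (INR i - INR m)))) with
          (((-1) ^ (m - 1 - i) * p) * ((INR k - INR m) / (INR i - INR m))) by ring.
        apply Rmult_lt_0_compat; auto.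
      * replace (S m - 1 - i)%nat with (S (m - 1 - i)) by lia.
        assert (INR i < INR m) by (apply lt_INR; lia).
        assert (0 < (INR k - INR m) / (INR m - INR i)) by (apply Rdiv_lt_0_compat; lra).
        replace ((INR k - INR m) / (INR i - INR m)) with (- ((INR k - INR m) / (INR m - INR i)))
          by (field; lra).
        simpl pow.
        replace (-1 * (-1) ^ (m - 1 - i) * (p * - ((INR k - INR m) / (INR m - INR i)))) with
          (((-1) ^ (m - 1 - i) * p) * ((INR k - INR m) / (INR m - INR i))) by ring.
        apply Rmult_lt_0_compat; auto.
Qed.

Lemma P_abs n i k : (n <= k)%nat -> Rabs (P n i k) = (-1) ^ (n - 1 - i) * P n i k.
Proof. intros H. pose proof (Pr_sign i k n H) as Hs. rewrite <- P_Pr in Hs.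
  rewrite <- (Rabs_pos_eq _ (Rlt_le _ _ Hs)). rewrite Rabs_mult, pow_1_abs. ring. Qed.

Lemma P_abs_pos n i k : (n <= k)%nat -> 0 < Rabs (P n i k).
Proof. intros H. rewrite P_abs by auto. pose proof (Pr_sign i k n H). rewrite <- P_Pr in H0. lra. Qed.

Lemma ii_bound n rho (Hn : (1 <= n)%nat) (H0 : 0 < rho) : forall x, solves n rho x -> init_bounded n x ->
  forall k, (n <= k)%nat -> Rabs (x k) <= alpha n rho k.
Proof.
  intros x Hx Hb k Hk. rewrite (part_i n rho Hn H0 x Hx k). unfold ysol, alpha.
  eapply Rle_trans. apply rsum_abs. apply rsum_le. intros i Hi.
  rewrite powerRZ_sub_nat by lia. rewrite !Rabs_mult.
  rewrite (Rabs_pos_eq (rho ^ (k - i))) by (apply pow_le; lra).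
  specialize (Hb i Hi). pose proof (Rabs_pos (P n i k)). pose proof (pow_le rho (k - i) ltac:(lra)).
  pose proof (Rabs_pos (x i)).
  assert (0 <= Rabs (P n i k) * rho ^ (k - i)) by (apply Rmult_le_pos; auto).
  replace (Rabs (x i) * Rabs (P n i k) * rho ^ (k - i)) with (Rabs (x i) * (Rabs (P n i k) * rho ^ (k - i))) by ring.
  nra.
Qed.

Lemma ii_alt n rho (Hn : (1 <= n)%nat) (H0 : 0 < rho) : forall x, solves n rho x -> alt_init n x ->
  forall k, (n <= k)%nat -> x k = alpha n rho k.
Proof.
  intros x Hx Ha k Hk. rewrite (part_i n rho Hn H0 x Hx k). unfold ysol, alpha.
  apply rsum_ext. intros i Hi. rewrite powerRZ_sub_nat by lia. rewrite Ha by auto.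
  rewrite P_abs by auto. ring.
Qed.

Lemma bern_up m x : 0 <= x <= 1 -> (1 + x) ^ m <= 1 + (2 ^ m - 1) * x.
Proof. intros Hx. induction m. simpl; lra.
  simpl pow. assert (1 <= 2 ^ m) by (apply pow_R1_Rle; lra).
  assert (0 <= (1 + x) ^ m) by (apply pow_le; lra).
  apply Rle_trans with ((1 + x) * (1 + (2 ^ m - 1) * x)).
  apply Rmult_le_compat_l; [lra|exact IHm]. assert (x * x <= x) by nra. nra. Qed.

Lemma decay m rho c : 0 < rho < 1 -> 0 < c ->
  exists N, forall k, (N <= k)%nat -> INR k ^ m * rho ^ k < c.
Proof.
  intros Hr Hc. set (q := (1 + rho) / 2).
  assert (Hq : rho < q < 1) by (unfold q; lra).
  destruct (INR_unbounded (Rmax 1 (2 ^ m * rho / (q - rho)))) as [N0 HN0].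
  pose proof (Rmax_l 1 (2 ^ m * rho / (q - rho))). pose proof (Rmax_r 1 (2 ^ m * rho / (q - rho))).
  set (s := fun k => INR k ^ m * rho ^ k).
  assert (Hstep : forall k, (N0 <= k)%nat -> s (S k) <= q * s k).
  { intros k Hk. unfold s. assert (HkN : INR N0 <= INR k) by (apply le_INR; auto).
    assert (Hk0 : 0 < INR k) by lra.
    replace (INR (S k)) with (INR k * (1 + / INR k)) by (rewrite S_INR; field; lra).
    rewrite Rpow_mult_distr.
    assert (Hb : (1 + / INR k) ^ m <= 1 + (2 ^ m - 1) * / INR k).
    { apply bern_up. split. left; apply Rinv_0_lt_compat; auto.
      rewrite <- Rinv_1. apply Rinv_le_contravar; lra. }
    assert (H2 : 2 ^ m * rho / (q - rho) < INR k) by lra.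
    assert (H3 : 2 ^ m * rho < (q - rho) * INR k).
    { apply Rmult_lt_compat_r with (r := q - rho) in H2; [|lra].
      unfold Rdiv in H2. rewrite Rmult_assoc, Rinv_l in H2 by lra. lra. }
    assert (H4 : rho * (1 + (2 ^ m - 1) * / INR k) <= q).
    { assert (2 ^ m * rho * / INR k <= q - rho).
      { apply Rmult_le_reg_r with (INR k); auto. rewrite Rmult_assoc, Rinv_l by lra. lra. }
      assert (0 < / INR k) by (apply Rinv_0_lt_compat; auto). nra. }
    assert (0 <= INR k ^ m) by (apply pow_le; lra).
    assert (0 < rho ^ k) by (apply pow_lt; lra).
    assert (0 <= (1 + / INR k) ^ m) by (apply pow_le; left; apply Rplus_lt_0_compat; [lra|apply Rinv_0_lt_compat; auto]).
    simpl pow.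
    replace (INR k ^ m * (1 + / INR k) ^ m * (rho * rho ^ k)) with
      ((INR k ^ m * rho ^ k) * ((1 + / INR k) ^ m * rho)) by ring.
    replace (q * (INR k ^ m * rho ^ k)) with ((INR k ^ m * rho ^ k) * q) by ring.
    apply Rmult_le_compat_l. apply Rmult_le_pos; lra. nra. }
  assert (Hiter : forall j, s (N0 + j)%nat <= q ^ j * s N0).
  { induction j. rewrite Nat.add_0_r. simpl; lra.
    replace (N0 + S j)%nat with (S (N0 + j)) by lia.
    eapply Rle_trans. apply Hstep; lia. simpl pow.
    assert (0 < q) by lra. nra. }
  assert (Hs0 : 0 < s N0).
  { unfold s. apply Rmult_lt_0_compat; apply pow_lt; lra. }
  destruct (pow_lt_1_zero q ltac:(rewrite Rabs_pos_eq; lra) (c / s N0)) as [M HM].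
  { apply Rdiv_lt_0_compat; auto. }
  exists (N0 + M)%nat. intros k Hk.
  replace k with (N0 + (k - N0))%nat by lia.
  fold (s (N0 + (k - N0))%nat).
  eapply Rle_lt_trans. apply Hiter.
  specialize (HM (k - N0)%nat ltac:(lia)). rewrite Rabs_pos_eq in HM by (apply pow_le; lra).
  apply Rmult_lt_compat_r with (r := s N0) in HM; auto.
  unfold Rdiv in HM. rewrite Rmult_assoc, Rinv_l in HM by lra. lra.
Qed.

Lemma nat_dist i j : i <> j -> 1 <= Rabs (INR i - INR j).
Proof. intros H. destruct (Nat.lt_ge_cases i j).
  - assert (INR (S i) <= INR j) by (apply le_INR; lia). rewrite S_INR in H1.
    unfold Rabs; destruct Rcase_abs; lra.
  - assert (INR (S j) <= INR i) by (apply le_INR; lia). rewrite S_INR in H1.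
    unfold Rabs; destruct Rcase_abs; lra. Qed.

Lemma P_bound n i k : (1 <= n)%nat -> (n <= k)%nat -> Rabs (P n i k) <= INR k ^ n.
Proof. intros Hn Hk. unfold P. apply rprod_abs_le. apply pos_INR.
  intros j Hj. assert (1 <= INR k) by (apply (le_INR 1); lia).
  destruct (Nat.eqb_spec j i). rewrite Rabs_R1; lra.
  assert (Hd : 1 <= Rabs (INR i - INR j)) by (apply nat_dist; auto).
  assert (Hjk : INR j < INR k) by (apply lt_INR; lia).
  pose proof (pos_INR j).
  set (X := Rabs ((INR k - INR j) / (INR i - INR j))).
  assert (HX : X * Rabs (INR i - INR j) = INR k - INR j).
  { unfold X. rewrite <- Rabs_mult. unfold Rdiv. rewrite Rmult_assoc, Rinv_l.
    rewrite Rmult_1_r, Rabs_pos_eq; lra. intros Heq. rewrite Heq, Rabs_R0 in Hd. lra. }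
  assert (0 <= X) by apply Rabs_pos. nra.
Qed.

Lemma alpha_bound n rho k : (1 <= n)%nat -> 0 < rho < 1 -> (n <= k)%nat ->
  alpha n rho k <= INR n * (INR k ^ n * rho ^ (k - n)).
Proof. intros Hn Hr Hk. unfold alpha. rewrite <- rsum_const. apply rsum_le. intros i Hi.
  apply Rmult_le_compat. apply Rabs_pos. apply pow_le; lra. apply P_bound; auto.
  replace (k - i)%nat with ((k - n) + (n - i))%nat by lia. rewrite pow_add.
  assert (rho ^ (n - i) <= 1). { rewrite <- (pow1 (n - i)). apply pow_incr; lra. }
  assert (0 <= rho ^ (k - n)) by (apply pow_le; lra). nra. Qed.

Lemma alpha_pos n rho : (1 <= n)%nat -> 0 < rho -> 0 < alpha n rho n.
Proof. intros Hn Hr. unfold alpha. destruct n as [|m]; [lia|]. rewrite rsum_S.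
  assert (0 <= rsum m (fun i => Rabs (P (S m) i (S m)) * rho ^ (S m - i))).
  { apply rsum_nonneg. intros. apply Rmult_le_pos. apply Rabs_pos. apply pow_le; lra. }
  assert (0 < Rabs (P (S m) m (S m)) * rho ^ (S m - m)).
  { apply Rmult_lt_0_compat. apply P_abs_pos; auto. apply pow_lt; auto. } lra. Qed.

Lemma fin_max (f : nat -> R) a : forall d, exists K, (a <= K <= a + d)%nat /\
  forall k, (a <= k <= a + d)%nat -> f k <= f K.
Proof. induction d.
  - exists a. split. lia. intros k Hk. replace k with a by lia. lra.
  - destruct IHd as [K [HK1 HK2]].
    destruct (Rle_dec (f K) (f (a + S d)%nat)).
    + exists (a + S d)%nat. split. lia. intros k Hk.
      destruct (Nat.eq_dec k (a + S d)) as [->|]. lra. eapply Rle_trans; [apply HK2; lia|lra].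
    + exists K. split. lia. intros k Hk.
      destruct (Nat.eq_dec k (a + S d)) as [->|]. lra. apply HK2; lia.
Qed.

Lemma alpha_max n rho : (1 <= n)%nat -> 0 < rho < 1 ->
  exists K : nat, (n <= K)%nat /\ forall k : nat, (n <= k)%nat -> alpha n rho k <= alpha n rho K.
Proof.
  intros Hn Hr. pose proof (alpha_pos n rho Hn ltac:(lra)) as Ha.
  assert (HnR : 0 < INR n) by (apply (lt_INR 0); lia).
  assert (Hrn : 0 < rho ^ n) by (apply pow_lt; lra).
  set (c := alpha n rho n * rho ^ n / INR n).
  assert (Hc : 0 < c) by (unfold c; apply Rdiv_lt_0_compat; [apply Rmult_lt_0_compat|]; auto).
  destruct (decay n rho c Hr Hc) as [N HN].
  destruct (fin_max (alpha n rho) n N) as [K [HK1 HK2]].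
  exists K. split. lia. intros k Hk.
  destruct (Nat.le_gt_cases k (n + N)). apply HK2; lia.
  assert (alpha n rho k < alpha n rho n).
  { eapply Rle_lt_trans. apply alpha_bound; auto.
    specialize (HN k ltac:(lia)).
    replace (rho ^ (k - n)) with (rho ^ k / rho ^ n).
    2:{ replace k with ((k - n) + n)%nat at 1 by lia. rewrite pow_add. field. lra. }
    replace (INR n * (INR k ^ n * (rho ^ k / rho ^ n))) with ((INR n / rho ^ n) * (INR k ^ n * rho ^ k))
      by (field; lra).
    replace (alpha n rho n) with ((INR n / rho ^ n) * c) by (unfold c; field; lra).
    apply Rmult_lt_compat_l; auto. apply Rdiv_lt_0_compat; auto. }
  pose proof (HK2 n ltac:(lia)). lra.
Qed.

Lemma prod_num k : forall m, (m <= k)%nat ->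
  rprod m (fun j => INR k - INR j) * INR (fact (k - m)) = INR (fact k).
Proof. induction m; intros Hm.
  - rewrite rprod_0, Nat.sub_0_r. ring.
  - rewrite rprod_S. rewrite <- IHm by lia.
    replace (k - m)%nat with (S (k - S m)) by lia. rewrite fact_simpl, mult_INR.
    replace (INR (S (k - S m))) with (INR k - INR m).
    ring. rewrite <- minus_INR by lia. f_equal. lia. Qed.

Lemma rprod_div m a b : rprod m (fun j => a j / b j) = rprod m a / rprod m b.
Proof. induction m. rewrite !rprod_0. field.
  rewrite !rprod_S, IHm. unfold Rdiv. rewrite Rinv_mult. ring. Qed.

Lemma C_prod m k : (m <= k)%nat -> C k m = rprod m (fun j => (INR k - INR j) / (INR m - INR j)).
Proof. intros H. rewrite rprod_div. unfold C.
  rewrite <- (prod_num k m H). rewrite <- (prod_num m m (le_n m)). rewrite Nat.sub_diag.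
  simpl fact. simpl INR.
  assert (INR (fact (k - m)) <> 0) by apply INR_fact_neq_0.
  assert (rprod m (fun j => INR m - INR j) <> 0).
  { intros Heq. pose proof (prod_num m m (le_n m)). rewrite Heq in H1.
    pose proof (INR_fact_neq_0 m). lra. }
  field. auto. Qed.

Lemma P_last m k : (m <= k)%nat -> P (S m) m k = C k m.
Proof. intros H. unfold P. rewrite rprod_S, Nat.eqb_refl, Rmult_1_r, C_prod by auto.
  apply rprod_ext. intros j Hj. destruct (Nat.eqb_spec j m); [lia|reflexivity]. Qed.

Lemma iii_a n rho (Hn : (1 <= n)%nat) (H0 : 0 < rho) : forall x, solves n rho x -> unit_init n x ->
  forall k, (n - 1 <= k)%nat -> x k = beta n rho k.
Proof.
  intros x Hx Hu k Hk. rewrite (part_i n rho Hn H0 x Hx k). unfold ysol, beta.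
  rewrite (rsum_single n (n - 1)); [| lia | intros i Hi Hne; rewrite Hu by auto;
    destruct (Nat.eqb_spec i (n - 1)); [lia|ring]].
  rewrite Hu by lia. rewrite Nat.eqb_refl. rewrite powerRZ_sub_nat by lia.
  destruct n as [|m]; [lia|]. replace (S m - 1)%nat with m by lia.
  rewrite P_last by lia. replace (k + 1 - S m)%nat with (k - m)%nat by lia. ring.
Qed.

Lemma beta_nonneg n rho k : 0 < rho -> 0 <= beta n rho k.
Proof. intros H. unfold beta, C. apply Rmult_le_pos. apply Rmult_le_pos. apply pos_INR.
  left; apply Rinv_0_lt_compat, Rmult_lt_0_compat; apply INR_fact_lt_0. apply pow_le; lra. Qed.

Lemma beta_step m rho k : (m <= k)%nat ->
  beta (S m) rho (S k) * (INR (S k) - INR m) = beta (S m) rho k * INR (S k) * rho.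
Proof. intros H. unfold beta. replace (S m - 1)%nat with m by lia.
  replace (S k + 1 - S m)%nat with (S (k - m)) by lia.
  replace (k + 1 - S m)%nat with (k - m)%nat by lia.
  unfold C. replace (S k - m)%nat with (S (k - m)) by lia.
  rewrite !fact_simpl, !mult_INR.
  replace (INR (S (k - m))) with (INR (S k) - INR m) by (rewrite <- minus_INR by lia; f_equal; lia).
  assert (INR (S k) - INR m <> 0). { assert (INR m < INR (S k)) by (apply lt_INR; lia). lra. }
  pose proof (INR_fact_neq_0 m). pose proof (INR_fact_neq_0 (k - m)).
  simpl pow. field. auto. Qed.

Definition rr (m : nat) (rho : R) := (INR (S m) - 1) / (1 - rho).
Definition KK (m : nat) (rho : R) := Z.to_nat (Int_part (rr m rho)).

Lemma r_eq (m : nat) (rho : R) (Hr : 0 < rho < 1) : (rr m rho) * (1 - rho) = INR m.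
Proof. unfold rr. rewrite S_INR. field. lra. Qed.

Lemma Kb_props (m : nat) (rho : R) (Hr : 0 < rho < 1) : INR (KK m rho) <= (rr m rho) /\ (rr m rho) < INR (KK m rho) + 1.
Proof.
  pose proof (base_Int_part (rr m rho)) as [H1 H2].
  assert (0 <= (rr m rho)). { unfold rr. rewrite S_INR. pose proof (pos_INR m). apply Rmult_le_pos. lra. left; apply Rinv_0_lt_compat; lra. }
  assert (Hz : (0 <= Int_part (rr m rho))%Z). { assert (-1 < Int_part (rr m rho))%Z by (apply lt_IZR; lra). lia. }
  unfold KK. rewrite INR_IZR_INZ, Znat.Z2Nat.id by auto. lra.
Qed.

Lemma beta_inc (m : nat) (rho : R) (Hr : 0 < rho < 1) k : (m <= k)%nat -> (S k <= (KK m rho))%nat -> beta (S m) rho k <= beta (S m) rho (S k).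
Proof. intros H1 H2. destruct (Kb_props m rho Hr) as [K1 K2]. pose proof (r_eq m rho Hr).
  assert (INR (S k) <= INR (KK m rho)) by (apply le_INR; auto).
  assert (Hlt : INR m < INR (S k)) by (apply lt_INR; lia).
  pose proof (beta_step m rho k H1). pose proof (beta_nonneg (S m) rho k ltac:(lra)).
  assert (INR (S k) * (1 - rho) <= INR m) by nra.
  apply Rmult_le_reg_r with (INR (S k) - INR m). lra. nra. Qed.

Lemma beta_dec (m : nat) (rho : R) (Hr : 0 < rho < 1) k : ((KK m rho) <= k)%nat -> (m <= k)%nat -> beta (S m) rho (S k) <= beta (S m) rho k.
Proof. intros H1 H1'. destruct (Kb_props m rho Hr) as [K1 K2]. pose proof (r_eq m rho Hr).
  assert (INR (KK m rho) <= INR k) by (apply le_INR; auto).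
  assert (Hlt : INR m < INR k + 1) by (pose proof (lt_INR m (S k) ltac:(lia)); rewrite S_INR in *; lra).
  pose proof (beta_step m rho k H1'). rewrite S_INR in *. pose proof (beta_nonneg (S m) rho k ltac:(lra)).
  assert (INR m < (INR k + 1) * (1 - rho)) by nra.
  apply Rmult_le_reg_r with (INR k + 1 - INR m). lra. nra. Qed.

Lemma m_le_Kb (m : nat) (rho : R) (Hr : 0 < rho < 1) : (m <= (KK m rho))%nat.
Proof. destruct (Kb_props m rho Hr) as [K1 K2]. pose proof (r_eq m rho Hr).
  assert (INR m <= (rr m rho)). { pose proof (pos_INR m). nra. }
  assert (INR m < INR (S (KK m rho))) by (rewrite S_INR; lra). match goal with Hh : INR m < INR (S (KK m rho)) |- _ => apply INR_lt in Hh end. lia. Qed.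

Lemma beta_up (m : nat) (rho : R) (Hr : 0 < rho < 1) j : (m <= j)%nat -> forall d, (j + d <= (KK m rho))%nat -> beta (S m) rho j <= beta (S m) rho (j + d).
Proof. intros Hj d. induction d; intros H. rewrite Nat.add_0_r; lra.
  eapply Rle_trans. apply IHd; lia. replace (j + S d)%nat with (S (j + d)) by lia.
  apply (beta_inc m rho Hr); lia. Qed.

Lemma beta_down (m : nat) (rho : R) (Hr : 0 < rho < 1) j : ((KK m rho) <= j)%nat -> (m <= j)%nat -> forall d, beta (S m) rho (j + d) <= beta (S m) rho j.
Proof. intros Hj Hj' d. induction d. rewrite Nat.add_0_r; lra.
  eapply Rle_trans; [|apply IHd]. replace (j + S d)%nat with (S (j + d)) by lia.
  apply (beta_dec m rho Hr); lia. Qed.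

Lemma beta_max (m : nat) (rho : R) (Hr : 0 < rho < 1) k : (m <= k)%nat -> beta (S m) rho k <= beta (S m) rho (KK m rho).
Proof. intros H. pose proof (m_le_Kb m rho Hr). destruct (Nat.le_gt_cases k (KK m rho)).
  pose proof ((beta_up m rho Hr) k H ((KK m rho) - k) ltac:(lia)) as Hb. replace (k + ((KK m rho) - k))%nat with (KK m rho) in Hb by lia. exact Hb.
  pose proof ((beta_down m rho Hr) (KK m rho) ltac:(lia) ltac:(lia) (k - (KK m rho))) as Hb. replace ((KK m rho) + (k - (KK m rho)))%nat with k in Hb by lia. exact Hb. Qed.

Lemma beta_n (m : nat) (rho : R) (Hr : 0 < rho < 1) : beta (S m) rho (S m) = INR (S m) * rho.
Proof. unfold beta. replace (S m - 1)%nat with m by lia. replace (S m + 1 - S m)%nat with 1%nat by lia.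
  unfold C. replace (S m - m)%nat with 1%nat by lia. rewrite fact_simpl, mult_INR. simpl fact.
  pose proof (INR_fact_neq_0 m). replace (INR 1) with 1 by reflexivity. field. auto. Qed.

Lemma peak (m : nat) (rho : R) (Hr : 0 < rho < 1) : (exists k : nat, (S m <= k)%nat /\ 1 < beta (S m) rho k) <-> 1 / INR (S m) < rho.
Proof. assert (Hn : 0 < INR (S m)) by (apply lt_0_INR; lia). split.
  - intros [k [Hk Hb]]. destruct (Rlt_le_dec (1 / INR (S m)) rho) as [|Hle]; auto. exfalso.
    assert (Hnr : INR (S m) * rho <= 1).
    { apply Rmult_le_compat_l with (r := INR (S m)) in Hle; [|lra].
      replace (INR (S m) * (1 / INR (S m))) with 1 in Hle by (field; lra). lra. }
    destruct (Kb_props m rho Hr) as [K1 K2]. pose proof (r_eq m rho Hr).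
    assert ((rr m rho) <= INR (S m)). { rewrite S_INR in *. nra. }
    assert ((KK m rho) <= S m)%nat by (apply INR_le; lra).
    pose proof ((beta_down m rho Hr) (S m) ltac:(lia) ltac:(lia) (k - S m)).
    replace (S m + (k - S m))%nat with k in H2 by lia. rewrite (beta_n m rho Hr) in H2. lra.
  - intros H. exists (S m). split. lia. rewrite (beta_n m rho Hr).
    apply Rmult_lt_compat_l with (r := INR (S m)) in H; auto.
    replace (INR (S m) * (1 / INR (S m))) with 1 in H by (field; lra). lra.
Qed.

Theorem theorem2p1 (n : nat) (rho : R) (Hn : (1 <= n)%nat)
  (Hrho0 : 0 < rho) (Hrho1 : rho < 1) :
  (* (i) explicit solution *)
  (forall x : nat -> R, solves n rho x ->
     forall k : nat,
       x k = rsum n (fun i => x i * P n i k *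
                               powerRZ rho (Z.of_nat k - Z.of_nat i)%Z))
  /\
  (* (ii) max of x_k over the unit ball is alpha_{k,n}, attained at the
     alternating initial condition *)
  ((forall x : nat -> R, solves n rho x -> init_bounded n x ->
      forall k : nat, (n <= k)%nat -> x k <= alpha n rho k /\ Rabs (x k) <= alpha n rho k)
   /\ (forall x : nat -> R, solves n rho x -> alt_init n x ->
      forall k : nat, (n <= k)%nat -> x k = alpha n rho k)
   /\ (exists K : nat, (n <= K)%nat /\
         forall k : nat, (n <= k)%nat -> alpha n rho k <= alpha n rho K)
   /\ (forall K : nat, (n <= K)%nat ->
         (forall k : nat, (n <= k)%nat -> alpha n rho k <= alpha n rho K) ->
         (* max over ||x0||<=1 of eta(x0) = max_k alpha_{k,n} = alpha_{K,n},
            attained by the alternating initial condition at index K *)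
         (forall x : nat -> R, solves n rho x -> init_bounded n x ->
            forall k : nat, (n <= k)%nat -> Rabs (x k) <= alpha n rho K)
         /\ (forall x : nat -> R, solves n rho x -> alt_init n x ->
               x K = alpha n rho K)))
  /\
  (* (iii) the initial condition (0,...,0,1) *)
  ((forall x : nat -> R, solves n rho x -> unit_init n x ->
      forall k : nat, (n - 1 <= k)%nat -> x k = beta n rho k)
   /\ (let Kb := Z.to_nat (Int_part ((INR n - 1) / (1 - rho))) in
       (n - 1 <= Kb)%nat /\
       forall k : nat, (n - 1 <= k)%nat -> beta n rho k <= beta n rho Kb)
   /\ ((exists k : nat, (n <= k)%nat /\ 1 < beta n rho k) <-> 1 / INR n < rho)).
Proof.
  assert (Hr : 0 < rho < 1) by lra.
  split; [|split].
  - intros x Hx k. exact (part_i n rho Hn Hrho0 x Hx k).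
  - split; [|split; [|split]].
    + intros x Hx Hb k Hk. pose proof (ii_bound n rho Hn Hrho0 x Hx Hb k Hk).
      split; auto. eapply Rle_trans; [apply Rle_abs|]; auto.
    + exact (ii_alt n rho Hn Hrho0).
    + apply alpha_max; auto.
    + intros K HK Hmax. split.
      * intros x Hx Hb k Hk. eapply Rle_trans; [apply (ii_bound n rho Hn Hrho0 x Hx Hb k Hk)|]. auto.
      * intros x Hx Ha. apply (ii_alt n rho Hn Hrho0); auto.
  - split; [exact (iii_a n rho Hn Hrho0)|].
    destruct n as [|m]; [lia|].
    change (Z.to_nat (Int_part ((INR (S m) - 1) / (1 - rho)))) with (KK m rho).
    replace (S m - 1)%nat with m by lia.
    split.
    + cbv zeta. split. apply m_le_Kb; auto. intros k Hk. apply beta_max; auto.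
    + apply peak; auto.
Qed.
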